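(* Let $G$ be a finite soluble group and let $X = \{[a,b]^k \mid a,b \in G,\ (|a|,|b|)=1,\ k \in \mathbb{Z}\}$. Assume that for all $x,y \in X$ with $(|x|,|y|)=1$ we have $|xy|=|x|\,|y|$. Then $\gamma_\infty(G)$ is nilpotent.
   Context: All groups are finite. $|x|$ denotes the order of an element $x$. $[a,b]=a^{-1}b^{-1}ab$. $\gamma_\infty(G)$ denotes the nilpotent residual of $G$, i.e. the last term of the lower central series of $G$. *)

(* Defs.v *)
From mathcomp Require Import all_boot all_fingroup all_solvable.
Set Implicit Arguments. Unset Strict Implicit. Unset Printing Implicit Defensive.
Local Open Scope group_scope.

(* The series 'L_1(G) = G >= 'L_2(G) >= ... stabilises after
   at most #|G| steps, so 'L_(#|G|.+1)(G) is its final term. *)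
Definition nil_residual (gT : finGroupType) (G : {set gT}) : {set gT} :=
  'L_(#|G|.+1)(G).

Definition in_coprime_comm_powers (gT : finGroupType) (G : {set gT}) (x : gT)
  : Prop :=
  exists (a b : gT) (k : nat),
    [/\ a \in G, b \in G, coprime #[a] #[b] &
        x = [~ a, b] ^+ k \/ x = [~ a, b] ^- k].

(* Main.v *)
Require Import Defs.
From mathcomp Require Import all_boot all_fingroup all_solvable.
Set Implicit Arguments. Unset Strict Implicit. Unset Printing Implicit Defensive.
Local Open Scope group_scope.

Lemma cent_Fitting_sub_gen (gT : finGroupType) (H C : {group gT}) :
  solvable H -> C <| H -> C \subset 'C('F(H)) -> C \subset 'F(H).
Proof.
move=> solH nsCH sCF.
have solC : solvable C by apply: solvableS solH; apply: normal_sub.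
have [n Cn1] : exists n, C^`(n) = 1 by apply/derivedP.
have step m : C^`(m.+1) \subset 'F(H) -> C^`(m) \subset 'F(H).
  move=> sD.
  apply: Fitting_max.
    exact: char_normal_trans (der_char m C) nsCH.
  apply: small_nil_class.
  apply: leq_trans (_ : 2 <= 5) => //.
  rewrite nil_class2 subsetI der_sub /=.
  have sKC : C^`(m) \subset 'C('F(H)).
    exact: subset_trans (der_sub m C) sCF.
  rewrite centsC in sKC.
  exact: subset_trans sD sKC.
have IH j : j <= n -> C^`(n - j) \subset 'F(H).
  elim: j => [|j IHj] ljn; first by rewrite subn0 Cn1 sub1G.
  apply: step; rewrite subnSK //; apply: IHj; exact: ltnW.
by have := IH n (leqnn n); rewrite subnn derg0.
Qed.

Lemma cent_Fitting_sub (gT : finGroupType) (H : {group gT}) :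
  solvable H -> 'C_H('F(H)) \subset 'F(H).
Proof.
move=> solH; apply: (@cent_Fitting_sub_gen _ H 'C_H('F(H))%G) => //.
  exact: norm_normalI (norms_cent (normal_norm (Fitting_normal H))).
exact: subsetIr.
Qed.
Section XLemmas.
Variables (gT : finGroupType) (G : {group gT}).
Local Notation X := (in_coprime_comm_powers G).

Lemma X_sub x : X x -> x \in G.
Proof.
case=> a [b [k [Ga Gb _ [->|->]]]]; first by rewrite groupX ?groupR.
by rewrite groupV groupX ?groupR.
Qed.

Lemma X_comm a b : a \in G -> b \in G -> coprime #[a] #[b] -> X [~ a, b].
Proof. by move=> Ga Gb cab; exists a, b, 1%N; split=> //; left; rewrite expg1. Qed.

Lemma X_exp x m : X x -> X (x ^+ m).
Proof.
case=> a [b [k [Ga Gb cab [->|->]]]]; exists a, b, (k * m)%N; split=> //.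
  by left; rewrite expgM.
by right; rewrite expgVn expgM.
Qed.

Lemma X_V x : X x -> X (x^-1).
Proof.
case=> a [b [k [Ga Gb cab [->|->]]]]; exists a, b, k; split=> //.
  by right.
by left; rewrite invgK.
Qed.

Lemma X_J x g : g \in G -> X x -> X (x ^ g).
Proof.
move=> Gg; case=> a [b [k [Ga Gb cab Ex]]].
exists (a ^ g), (b ^ g), k; split; rewrite ?groupJ ?orderJ //.
by case: Ex => ->; [left | right]; rewrite ?conjVg conjXg conjRg.
Qed.

Lemma X_constt pi x : X x -> X x.`_pi.
Proof. by move=> Xx; have /cycleP[i ->] := cycle_constt pi x; apply: X_exp. Qed.


Hypothesis hyp : forall x y : gT, X x -> X y ->
     coprime #[x] #[y] -> #[x * y] = (#[x] * #[y])%N.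
Hypothesis solG : solvable G.

Lemma X_pcore pi x : X x -> pi.-elt x -> x \in 'O_pi(G).
Proof.
move=> Xx pix.
set Q := 'O_pi(G).
have nQG : G \subset 'N(Q) := normal_norm (pcore_normal pi G).
have Gx := X_sub Xx.
have Nx : x \in 'N(Q) := subsetP nQG x Gx.
have solGb : solvable (G / Q) := quotient_sol Q solG.
have Ob1 : 'O_pi(G / Q) = 1 := trivg_pcore_quotient pi G.
have F'b : pi^'.-group 'F(G / Q).
  have := nilpotent_pcoreC pi (Fitting_nil (G / Q)).
  case/dprodP=> _ defF _ _.
  have O1 : 'O_pi('F(G / Q)) = 1.
    by apply/trivgP; rewrite -Ob1 pcore_Fitting.
  by rewrite -defF O1 mul1g pcore_pgroup.
apply: coset_idr => //.
set xb := coset Q x.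
have Gxb : xb \in G / Q by apply: mem_quotient.
have pixb : pi.-elt xb by apply: morph_p_elt.
suff Cxb : xb \in 'C_(G / Q)('F(G / Q)).
  have Fxb := subsetP (cent_Fitting_sub solGb) xb Cxb.
  have pi'xb : pi^'.-elt xb := mem_p_elt F'b Fxb.
  by apply/eqP; rewrite -order_eq1; apply/eqP; apply: pnat_1 pixb pi'xb.
rewrite inE Gxb; apply/centP=> wb Fwb.
have Gwb := subsetP (Fitting_sub _) wb Fwb.
case/morphimP: Gwb => w Nw Gw Ewb.
set k := w.`_pi^'.
have Gk : k \in G.
  by apply: (subsetP _ _ (cycle_constt _ w)); rewrite cycle_subG.
have Nk : k \in 'N(Q) := subsetP nQG k Gk.
have pi'wb : pi^'.-elt wb := mem_p_elt F'b Fwb.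
have Ekb : coset Q k = wb.
  by rewrite morph_constt // -Ewb constt_p_elt.
set t := [~ x, k].
have Xt : X t.
  apply: X_comm => //; apply: pnat_coprime pix _; exact: p_elt_constt.
have Gt : t \in G by rewrite groupR.
have Etb : coset Q t = [~ xb, wb].
  by rewrite -Ekb; apply: (morphR (coset_morphism Q)).
have Ftb : coset Q t \in 'F(G / Q).
  rewrite Etb commgEr groupMr // memJ_norm ?groupV //.
  exact: subsetP (normal_norm (Fitting_normal _)) xb Gxb.
have pi'tb : pi^'.-elt (coset Q t) := mem_p_elt F'b Ftb.
set z := t.`_pi.
set y := t.`_pi^'.
have Gz : z \in G by apply: (subsetP _ _ (cycle_constt _ t)); rewrite cycle_subG.
have Qz : z \in Q.
  apply: coset_idr; first exact: subsetP nQG z Gz.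
  by rewrite morph_constt ?(subsetP nQG) //; apply/constt1P.
have Xxk : X (x ^ k) := X_J Gk Xx.
have Xy : X y^-1 := X_V (X_constt _ Xt).
have pi'y : pi^'.-elt y := p_elt_constt _ _.
have cop : coprime #[x ^ k] #[y^-1].
  by rewrite orderJ orderV; apply: pnat_coprime pix pi'y.
have Ho := hyp Xxk Xy cop.
have Exz : x ^ k * y^-1 = x * z.
  by rewrite conjg_mulR -/t -{1}(consttC pi t) -/z -/y mulgA mulgK.
have pixz : pi.-elt (x * z).
  apply: (mem_p_elt (G := (Q <*> <[x]>)%G)).
    rewrite /= norm_joinEr ?cycle_subG // pgroupM pcore_pgroup.
    exact: pix.
  apply: groupM; first by apply: (subsetP (joing_subr _ _)); apply: cycle_id.
  by apply: (subsetP (joing_subl _ _)).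
move: pixz; rewrite -Exz /p_elt Ho orderJ orderV pnatM => /andP[_ piy].
have y1 : y = 1 by apply/eqP; rewrite -order_eq1; apply/eqP; apply: pnat_1 piy pi'y.
have Qt : t \in Q by rewrite -(consttC pi t) -/z -/y y1 mulg1.
apply/commgP; rewrite -Etb; apply/eqP; exact: coset_id.
Qed.

Lemma comm_Fitting a b :
  a \in G -> b \in G -> coprime #[a] #[b] -> [~ a, b] \in 'F(G).
Proof.
move=> Ga Gb cab; have Xx := X_comm Ga Gb cab.
rewrite -(prod_constt [~ a, b]); apply: group_prod => p _.
have := X_pcore (X_constt p Xx) (p_elt_constt p _).
rewrite -p_core_Fitting; apply: (subsetP (pcore_sub _ _)).
Qed.

Lemma quo_commute pi u v : u \in G / 'F(G) -> v \in G / 'F(G) ->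
  pi.-elt u -> pi^'.-elt v -> commute u v.
Proof.
set M := 'F(G).
have nMG : G \subset 'N(M) := normal_norm (Fitting_normal G).
move=> /morphimP[a Na Ga ->] /morphimP[b Nb Gb ->] pu pv.
set a1 := a.`_pi; set b1 := b.`_pi^'.
have Ga1 : a1 \in G by apply: (subsetP _ _ (cycle_constt _ a)); rewrite cycle_subG.
have Gb1 : b1 \in G by apply: (subsetP _ _ (cycle_constt _ b)); rewrite cycle_subG.
have Eu : coset M a1 = coset M a by rewrite morph_constt // constt_p_elt.
have Ev : coset M b1 = coset M b by rewrite morph_constt // constt_p_elt.
have cop : coprime #[a1] #[b1] by apply: pnat_coprime; apply: p_elt_constt.
apply/commgP; rewrite -[coset_morphism M a]Eu -[coset_morphism M b]Ev.
rewrite -(morphR (coset_morphism M)) ?(subsetP nMG) //.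
by apply/eqP; apply: coset_id; apply: comm_Fitting.
Qed.

Lemma quo_nil : nilpotent (G / 'F(G)).
Proof.
have solGb : solvable (G / 'F(G)) := quotient_sol _ solG.
apply: nilpotentS (Fitting_nil (G / 'F(G))).
suff: <<\bigcup_(P : {group coset_of 'F(G)} | Sylow (G / 'F(G)) P) P>> \subset 'F(G / 'F(G)).
  by rewrite Sylow_gen.
rewrite gen_subG; apply/bigcupsP=> P /SylowP[p pr_p sylP].
apply: Fitting_max; last exact: pgroup_nil (pHall_pgroup sylP).
have [K hallK] := Hall_exists p^' solGb.
have cPK : K \subset 'C(P).
  apply/centsP => v Kv u Pu.
  apply: commute_sym; apply: (@quo_commute p).
  - exact: subsetP (pHall_sub sylP) u Pu.
  - exact: subsetP (pHall_sub hallK) v Kv.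
  - exact: mem_p_elt (pHall_pgroup sylP) Pu.
  - exact: mem_p_elt (pHall_pgroup hallK) Kv.
have cop : coprime #|P| #|K|.
  by apply: pnat_coprime (pHall_pgroup sylP) (pHall_pgroup hallK).
have defG : P * K = G / 'F(G).
  apply/eqP; rewrite eqEcard mul_subG ?(pHall_sub sylP) ?(pHall_sub hallK) //=.
  rewrite coprime_cardMg // (card_Hall sylP) (card_Hall hallK) partnC //.
rewrite /normal (pHall_sub sylP) /= -defG mul_subG ?normG //.
exact: cents_norm.
Qed.
End XLemmas.

Unset Implicit Arguments.
Set Strict Implicit.

Theorem mainTheorem3 (gT : finGroupType) (G : {group gT}) :
  solvable G ->
  (forall x y : gT,
     in_coprime_comm_powers G x -> in_coprime_comm_powers G y ->
     coprime #[x] #[y] -> #[x * y] = (#[x] * #[y])%N) ->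
  nilpotent (nil_residual G).
Proof.
move=> solG hyp.
rewrite /nil_residual; apply: nilpotentS (Fitting_nil G).
have nFG : G \subset 'N('F(G)) := normal_norm (Fitting_normal G).
rewrite -quotient_sub1; last exact: subset_trans (lcn_sub _ _) nFG.
rewrite /quotient morphim_lcn //.
have nilGb := quo_nil hyp solG.
have L1 : 'L_(#|G|.+1)(G / 'F(G)) = 1.
  apply/lcn_nil_classP => //.
  rewrite nilpotent_class in nilGb.
  exact: ltnW (leq_trans nilGb (leq_quotient _ _)).
by rewrite L1.
Qed.
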